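(* $\mathrm{sdi\text{-}dist}$ is a semantic distance metric for CQs, and in fact an ultrametric, i.e., for all CQs $q_1,q_2,q_3$ of the same arity, $\mathrm{sdi\text{-}dist}(q_1,q_3)\le\max(\mathrm{sdi\text{-}dist}(q_1,q_2),\mathrm{sdi\text{-}dist}(q_2,q_3))$.
   Context: CQs are $q(x_1,\dots,x_k)\text{ :- }\alpha_1,\dots,\alpha_n$ (relational atoms, no constants, each answer variable occurring in an atom); $q(I)$ is the answer set on a finite database instance $I$; $q_1,q_2$ are equivalent if $q_1(I)=q_2(I)$ for all $I$. For CQs $q_1,q_2$ of the same arity, $\mathrm{sdi\text{-}dist}(q_1,q_2)=1/n$ where $n$ is the minimum number of facts of an instance $I$ with $q_1(I)\ne q_2(I)$, and $\mathrm{sdi\text{-}dist}(q_1,q_2)=0$ if no such instance exists. A semantic distance metric for CQs is a function $\mathrm{dist}$ from pairs of same-arity CQs to non-negative reals with $\mathrm{dist}(q_1,q_2)=\mathrm{dist}(q_2,q_1)$; $\mathrm{dist}(q_1,q_2)=0$ iff $q_1,q_2$ are equivalent; and $\mathrm{dist}(q_1,q_2)\le\mathrm{dist}(q_1,q_3)+\mathrm{dist}(q_3,q_2)$. *)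

(* Defs.v *)
From HB Require Import structures.
From mathcomp Require Import all_boot all_order all_algebra.
From mathcomp Require Import boolp reals.
Set Implicit Arguments. Unset Strict Implicit. Unset Printing Implicit Defensive.
Import Order.TTheory GRing.Theory Num.Theory.
Local Open Scope ring_scope.

Section CQs.
(* A relational schema: relation symbols [Sig] with arities [ar].
   Variables and constants are both drawn from [nat]. *)
Variables (Sig : eqType) (ar : Sig -> nat).

Definition atom := (Sig * seq nat)%type.

(* A CQ q(x_1,...,x_k) :- alpha_1,...,alpha_n : head = answer variables
   (x_1,...,x_k), body = the atoms. No constants. *)
Record CQ := mkCQ { head : seq nat; body : seq atom }.

Definition wf_CQ (q : CQ) : bool :=
  [&& body q != [::],
      all (fun a : atom => size a.2 == ar a.1) (body q) &
      all (fun x => has (fun a : atom => x \in a.2) (body q)) (head q)].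

Definition arity (q : CQ) : nat := size (head q).

Definition fact := (Sig * seq nat)%type.
Definition instance := seq fact.
Definition wf_instance (I : instance) : bool :=
  all (fun f : fact => size f.2 == ar f.1) I.
Definition nfacts (I : instance) : nat := size (undup I).

Definition answers (q : CQ) (I : instance) (t : seq nat) : Prop :=
  exists h : nat -> nat,
    (forall a, a \in body q -> ((a.1, map h a.2) : fact) \in I) /\
    map h (head q) = t.

Definition same_answers (q1 q2 : CQ) (I : instance) : Prop :=
  forall t, answers q1 I t <-> answers q2 I t.

Definition equivalent (q1 q2 : CQ) : Prop :=
  forall I, wf_instance I -> same_answers q1 q2 I.

Definition differ_at (q1 q2 : CQ) (n : nat) : Prop :=
  exists I, wf_instance I /\ nfacts I = n /\ ~ same_answers q1 q2 I.

Lemma differ_at_bool (q1 q2 : CQ) :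
  (exists n, differ_at q1 q2 n) -> exists n, `[< differ_at q1 q2 n >].
Proof. by case=> n Hn; exists n; apply/asboolP. Qed.

Definition sdi_dist {R : realType} (q1 q2 : CQ) : R :=
  match pselect (exists n, differ_at q1 q2 n) with
  | left H => ((ex_minn (differ_at_bool H))%:R)^-1
  | right _ => 0
  end.

Definition semantic_distance_metric {R : realType} (dist : CQ -> CQ -> R) : Prop :=
  (forall q1 q2, wf_CQ q1 -> wf_CQ q2 -> arity q1 = arity q2 ->
     0 <= dist q1 q2) /\
  (forall q1 q2, wf_CQ q1 -> wf_CQ q2 -> arity q1 = arity q2 ->
     dist q1 q2 = dist q2 q1) /\
  (forall q1 q2, wf_CQ q1 -> wf_CQ q2 -> arity q1 = arity q2 ->
     (dist q1 q2 = 0 <-> equivalent q1 q2)) /\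
  (forall q1 q2 q3, wf_CQ q1 -> wf_CQ q2 -> wf_CQ q3 ->
     arity q1 = arity q2 -> arity q1 = arity q3 ->
     dist q1 q2 <= dist q1 q3 + dist q3 q2).

Definition ultrametric {R : realType} (dist : CQ -> CQ -> R) : Prop :=
  forall q1 q2 q3, wf_CQ q1 -> wf_CQ q2 -> wf_CQ q3 ->
    arity q1 = arity q2 -> arity q2 = arity q3 ->
    dist q1 q3 <= Num.max (dist q1 q2) (dist q2 q3).

End CQs.

(* Main.v *)
Require Import Defs.
From HB Require Import structures.
From mathcomp Require Import all_boot all_order all_algebra.
From mathcomp Require Import boolp reals.
Set Implicit Arguments. Unset Strict Implicit. Unset Printing Implicit Defensive.
Import Order.TTheory GRing.Theory Num.Theory.
Local Open Scope ring_scope.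

Section Aux.
Variables (R : realType) (Sig : eqType) (ar : Sig -> nat).

Lemma no_ans_nil (q : CQ Sig) t : wf_CQ ar q -> ~ answers q [::] t.
Proof.
case/and3P => hb _ _ [h [hI _]].
case: (body q) hb hI => [//|a s] _ /(_ a); rewrite inE eqxx /=.
by move=> /(_ isT).
Qed.

Lemma differ_pos (q1 q2 : CQ Sig) n : wf_CQ ar q1 -> wf_CQ ar q2 ->
  differ_at ar q1 q2 n -> (0 < n)%N.
Proof.
move=> w1 w2 [I [_ [hn hs]]].
case: I hn hs => [|x I] hn hs.
  exfalso; apply: hs => t; split => [/(no_ans_nil w1)|/(no_ans_nil w2)] //.
rewrite -hn /nfacts; have : x \in undup (x :: I) by rewrite mem_undup inE eqxx.
by case: (undup _).
Qed.

Lemma differ_sym (q1 q2 : CQ Sig) n :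
  differ_at ar q1 q2 n -> differ_at ar q2 q1 n.
Proof.
move=> [I [w [hn hs]]]; exists I; split => //; split => // hs'; apply: hs.
by move=> t; split => /hs'.
Qed.

Lemma dist_case (q1 q2 : CQ Sig) : wf_CQ ar q1 -> wf_CQ ar q2 ->
  ((~ exists n, differ_at ar q1 q2 n) /\ sdi_dist (R:=R) ar q1 q2 = 0) \/
  (exists m, (0 < m)%N /\ differ_at ar q1 q2 m /\
     (forall k, differ_at ar q1 q2 k -> (m <= k)%N) /\
     sdi_dist (R:=R) ar q1 q2 = (m%:R)^-1).
Proof.
move=> w1 w2; rewrite /sdi_dist; case: pselect => [H|H]; [right|left; by split].
case: ex_minnP => m /asboolP Hm Hmin; exists m; split; first exact: differ_pos Hm.
split => //; split => // k Hk; apply: Hmin; exact/asboolP.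
Qed.

Lemma dist_ge0 (q1 q2 : CQ Sig) : wf_CQ ar q1 -> wf_CQ ar q2 ->
  0 <= sdi_dist (R:=R) ar q1 q2.
Proof.
move=> w1 w2; case: (dist_case w1 w2) => [[_ ->]//|[m [_ [_ [_ ->]]]]].
by rewrite invr_ge0 ler0n.
Qed.

Lemma ultra (q1 q2 q3 : CQ Sig) : wf_CQ ar q1 -> wf_CQ ar q2 -> wf_CQ ar q3 ->
  sdi_dist (R:=R) ar q1 q3 <=
  Num.max (sdi_dist (R:=R) ar q1 q2) (sdi_dist (R:=R) ar q2 q3).
Proof.
move=> w1 w2 w3; rewrite le_max.
case: (dist_case w1 w3) => [[_ ->]|[m [m0 [Hm [_ ->]]]]].
  by rewrite dist_ge0.
have key : forall qa qb, wf_CQ ar qa -> wf_CQ ar qb -> differ_at ar qa qb m ->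
    (m%:R : R)^-1 <= sdi_dist (R:=R) ar qa qb.
  move=> qa qb wa wb Hd; case: (dist_case wa wb) => [[H _]|[k [k0 [_ [Hk ->]]]]].
    by exfalso; apply: H; exists m.
  rewrite lef_pV2 ?posrE ?ltr0n // ler_nat; exact: Hk.
case: Hm => I [wI [hn hs]].
case: (pselect (same_answers q1 q2 I)) => h12.
  case: (pselect (same_answers q2 q3 I)) => h23.
    by exfalso; apply: hs => t; rewrite h12 h23.
  by rewrite (key _ _ w2 w3) ?orbT //; exists I.
by rewrite (key _ _ w1 w2) //; exists I.
Qed.

End Aux.

Theorem proposition44 (R : realType) (Sig : eqType) (ar : Sig -> nat) :
  semantic_distance_metric ar (sdi_dist (R:=R) ar) /\
  ultrametric ar (sdi_dist (R:=R) ar).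
Proof.
split; last by move=> q1 q2 q3 w1 w2 w3 _ _; exact: ultra.
split; first by move=> q1 q2 w1 w2 _; exact: dist_ge0.
split.
  move=> q1 q2 w1 w2 _.
  case: (dist_case R w1 w2) => [[H1 ->]|[m [_ [Hm [Hmin ->]]]]];
  case: (dist_case R w2 w1) => [[H2 ->]|[k [_ [Hk [Hkmin ->]]]]] //.
  - by exfalso; apply: H1; exists k; exact: differ_sym.
  - by exfalso; apply: H2; exists m; exact: differ_sym.
  - suff -> : m = k by [].
    by apply/eqP; rewrite eqn_leq Hmin ?Hkmin //; exact: differ_sym.
split.
  move=> q1 q2 w1 w2 _.
  case: (dist_case R w1 w2) => [[H ->]|[m [m0 [Hm [_ ->]]]]].
    split => // _ I wI; case: (pselect (same_answers q1 q2 I)) => // hs.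
    by exfalso; apply: H; exists (nfacts I); exists I.
  split.
    by move/eqP; rewrite invr_eq0 pnatr_eq0 => /eqP m00; rewrite m00 in m0.
  by move=> He; case: Hm => I [wI [_ hs]]; exfalso; apply: hs; apply: He.
move=> q1 q2 q3 w1 w2 w3 _ _.
apply: (le_trans (ultra R w1 w3 w2)).
by rewrite ge_max !lerDl !lerDr !dist_ge0.
Qed.
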